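(* Let $\kappa$ be a CMF kernel in dimension $D$. For all $\theta_1,\theta_2,\theta_3\in\mathbb R^D$, $\kappa(\theta_1,\theta_2)\,\kappa(\theta_2,\theta_3)\le\kappa(\theta_1,\theta_3)$.
   Context: CMF: $\varphi:[0,\infty)\to\mathbb R$ infinitely differentiable on $(0,\infty)$, right-continuous at $0$, $(-1)^n\varphi^{(n)}(x)\ge0$ for $x>0$, $n\ge0$. A CMF kernel in dimension $D$ is $\kappa(\theta,\theta')=\varphi(\|\theta-\theta'\|_p^p)$ with $\varphi$ a CMF, $\varphi(0)=1$, $\lim_{x\to\infty}\varphi(x)=0$, $0<p\le1$, $\|\theta\|_p^p=\sum_d|\theta[d]|^p$. *)

(* Defs.v *)
From Stdlib Require Import Reals Lra List.
Open Scope R_scope.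

Definition derivs_on_pos (phi : R -> R) (d : nat -> R -> R) : Prop :=
  (forall x, 0 < x -> d 0%nat x = phi x) /\
  (forall (n : nat) x, 0 < x -> derivable_pt_lim (d n) x (d (S n) x)).

Definition right_continuous_at_0 (phi : R -> R) : Prop :=
  forall eps, 0 < eps -> exists delta, 0 < delta /\
    forall x, 0 < x < delta -> Rabs (phi x - phi 0) < eps.

(* Completely monotone function on [0,oo) (values on negatives are ignored). *)
Definition CMF (phi : R -> R) : Prop :=
  right_continuous_at_0 phi /\
  exists d : nat -> R -> R, derivs_on_pos phi d /\
    forall (n : nat) x, 0 < x -> 0 <= (-1) ^ n * d n x.

Definition tends_to_0_at_infty (phi : R -> R) : Prop :=
  forall eps, 0 < eps -> exists M, forall x, M < x -> Rabs (phi x) < eps.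

(* x^p for x >= 0, p > 0, with 0^p = 0 (Stdlib's Rpower 0 p = 1). *)
Definition rpow (x p : R) : R := if Rle_dec x 0 then 0 else Rpower x p.

(* Vectors of R^D are represented as nat -> R, coordinates 0..D-1.
   ||theta||_p^p = sum_{d<D} |theta d|^p *)
Definition pnorm_pow (D : nat) (p : R) (theta : nat -> R) : R :=
  fold_right Rplus 0 (map (fun i => rpow (Rabs (theta i)) p) (seq 0 D)).

Definition CMF_kernel (phi : R -> R) (D : nat) (p : R)
  (t t' : nat -> R) : R :=
  phi (pnorm_pow D p (fun i => t i - t' i)).

(* Main.v *)
Require Import Defs.
From Stdlib Require Import Reals Lra Lia List Factorial.
Open Scope R_scope.

Lemma dpl_ext (f g : R -> R) x l l' :
  (forall y, f y = g y) -> l = l' -> derivable_pt_lim f x l -> derivable_pt_lim g x l'.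
Proof.
  intros Hfg Hl H e He. subst l'. destruct (H e He) as [del Hd]. exists del.
  intros h Hh Hh2. rewrite <- !Hfg. apply Hd; auto.
Qed.

Lemma decr (h h' : R -> R) x y : x <= y ->
  (forall t, x <= t <= y -> derivable_pt_lim h t (h' t)) ->
  (forall t, x < t < y -> h' t <= 0) -> h y <= h x.
Proof.
  intros Hxy Hd Hs. destruct (Rle_lt_or_eq_dec _ _ Hxy) as [Hlt|Heq].
  - destruct (MVT_cor2 h h' x y Hlt Hd) as [t [Ht1 Ht2]].
    assert (h' t * (y - x) <= 0).
    { assert (h' t <= 0) by (apply Hs; lra). nra. }
    lra.
  - subst; lra.
Qed.

Lemma incr (h h' : R -> R) x y : x <= y ->
  (forall t, x <= t <= y -> derivable_pt_lim h t (h' t)) ->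
  (forall t, x < t < y -> 0 <= h' t) -> h x <= h y.
Proof.
  intros Hxy Hd Hs.
  assert (- h y <= - h x); [|lra].
  apply (decr (fun t => - h t) (fun t => - h' t)); auto.
  - intros t Ht. apply (dpl_ext (- h)%F (fun t => - h t) t (- h' t)); auto. apply derivable_pt_lim_opp; auto.
  - intros t Ht. specialize (Hs t Ht). lra.
Qed.

Definition shift (d : nat -> R -> R) : nat -> R -> R := fun n x => d (S n) x.
Definition CMs (d : nat -> R -> R) : Prop :=
  (forall n x, 0 < x -> derivable_pt_lim (d n) x (d (S n) x)) /\
  (forall n x, 0 < x -> 0 <= (-1) ^ n * d n x).

Lemma CMs_neg d : CMs d -> CMs (fun n x => - d (S n) x).
Proof.
  intros [H1 H2]; split.
  - intros n x Hx. apply (dpl_ext (- d (S n))%F _ x (- d (S (S n)) x)); auto.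
    apply derivable_pt_lim_opp; auto.
  - intros n x Hx. specialize (H2 (S n) x Hx). simpl in H2. lra.
Qed.

Fixpoint T (d : nat -> R -> R) (c : R) (N : nat) (x : R) : R :=
  match N with
  | O => 0
  | S M => T d c M x + d M c * (x - c) ^ M / INR (fact M)
  end.
Definition Rm d c N x := d 0%nat x - T d c N x.

Lemma mono_deriv K c M x :
  derivable_pt_lim (fun y => K * (y - c) ^ M / INR (fact M)) x
    (match M with O => 0 | S j => K * (x - c) ^ j / INR (fact j) end).
Proof.
  assert (H1 : derivable_pt_lim (fun y => (y - c) ^ M) x (INR M * (x - c) ^ pred M * 1)).
  { apply (dpl_ext (comp (fun y => y ^ M) (fun y => y - c)) _ x (INR M * (x - c) ^ pred M * 1)); auto.
    apply derivable_pt_lim_comp.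
    - apply (dpl_ext (id - fct_cte c)%F _ x (1 - 0)); [intros; reflexivity| ring |].
      apply derivable_pt_lim_minus; [apply derivable_pt_lim_id|apply derivable_pt_lim_const].
    - apply derivable_pt_lim_pow. }
  apply (dpl_ext (mult_real_fct (K / INR (fact M)) (fun y => (y - c) ^ M)) _ x (K / INR (fact M) * (INR M * (x - c) ^ pred M * 1))).
  { intros; unfold mult_real_fct; field. apply INR_fact_neq_0. }
  2:{ apply derivable_pt_lim_scal; exact H1. }
  destruct M as [|j].
  - simpl. ring.
  - simpl pred. rewrite fact_simpl, mult_INR.
    field. split; [apply INR_fact_neq_0|]. rewrite S_INR. pose proof (pos_INR j). lra.
Qed.

Lemma T_deriv d c N x : derivable_pt_lim (T d c (S N)) x (T (shift d) c N x).
Proof.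
  induction N.
  - apply (dpl_ext (fun y => d 0%nat c * (y - c) ^ 0 / INR (fact 0)) _ x 0).
    { intros; simpl; ring. } { reflexivity. }
    apply (mono_deriv (d 0%nat c) c 0 x).
  - apply (dpl_ext (plus_fct (T d c (S N)) (fun y => d (S N) c * (y - c) ^ (S N) / INR (fact (S N)))) _ x (T (shift d) c N x + d (S N) c * (x - c) ^ N / INR (fact N))).
    { intros; reflexivity. } { reflexivity. }
    apply derivable_pt_lim_plus; auto. apply (mono_deriv (d (S N) c) c (S N) x).
Qed.

Lemma Rm_deriv d c N x : (forall n, derivable_pt_lim (d n) x (d (S n) x)) ->
  derivable_pt_lim (Rm d c N) x (Rm (shift d) c (pred N) x).
Proof.
  intros Hd. destruct N as [|M].
  - apply (dpl_ext (d 0%nat) _ x (d 1%nat x)). { intros; unfold Rm; simpl; ring. }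
    { unfold Rm, shift; simpl; ring. } apply Hd.
  - apply (dpl_ext (d 0%nat - T d c (S M))%F _ x (d 1%nat x - T (shift d) c M x)). { intros; reflexivity. }
    { reflexivity. }
    apply derivable_pt_lim_minus; [apply Hd| apply T_deriv].
Qed.

Lemma T_at_c d c N : T d c (S N) c = d 0%nat c.
Proof.
  induction N.
  - simpl. field.
  - change (T d c (S (S N)) c) with (T d c (S N) c + d (S N) c * (c - c) ^ (S N) / INR (fact (S N))).
    rewrite IHN. replace (c - c) with 0 by ring. rewrite pow_ne_zero by lia. unfold Rdiv; ring.
Qed.

Lemma Rm_at_c d c N : Rm d c (S N) c = 0.
Proof. unfold Rm; rewrite T_at_c; ring. Qed.

Lemma T_neg e c N x : T (fun n y => - e n y) c N x = - T e c N x.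
Proof.
  induction N; simpl. ring. rewrite IHN. unfold Rdiv; ring.
Qed.

Lemma Rm_neg e c N x : Rm (fun n y => - e n y) c N x = - Rm e c N x.
Proof. unfold Rm. rewrite T_neg. ring. Qed.
Lemma Rm_shift_neg d c N x : Rm (shift d) c N x = - Rm (fun n y => - d (S n) y) c N x.
Proof. rewrite Rm_neg. unfold shift. ring. Qed.

Lemma Rm_nonneg c N : forall d, CMs d -> forall x, 0 < x <= c -> 0 <= Rm d c N x.
Proof.
  induction N as [|M IH]; intros d Hd x Hx.
  - unfold Rm; simpl. destruct Hd as [_ H2]. specialize (H2 0%nat x (proj1 Hx)). simpl in H2. lra.
  - rewrite <- (Rm_at_c d c M).
    apply (decr (Rm d c (S M)) (Rm (shift d) c M)); [lra| |].
    + intros t Ht. apply (Rm_deriv d c (S M) t). intros n; apply (proj1 Hd); lra.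
    + intros t Ht. rewrite Rm_shift_neg.
      assert (0 <= Rm (fun n y => - d (S n) y) c M t); [|lra].
      apply IH; [apply CMs_neg; auto | lra].
Qed.

Definition E d c N x := INR (S N) * Rm d c (S N) x + (c - x) * Rm (shift d) c N x.

Lemma E_nonpos c N : forall d, CMs d -> forall x, 0 < x <= c -> E d c N x <= 0.
Proof.
  induction N as [|M IH]; intros d Hd x Hx.
  - assert (E d c 0 c = 0) by (unfold E; rewrite Rm_at_c; ring).
    rewrite <- H.
    apply (incr (E d c 0) (fun t => INR 1 * Rm (shift d) c 0 t + ((0 - 1) * Rm (shift d) c 0 t + (c - t) * Rm (shift (shift d)) c 0 t))); [lra| |].
    + intros t Ht. unfold E.
      apply (dpl_ext (plus_fct (mult_real_fct (INR 1) (Rm d c 1)) (mult_fct (fun y => c - y) (Rm (shift d) c 0))) _ t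
        (INR 1 * Rm (shift d) c 0 t + ((0 - 1) * Rm (shift d) c 0 t + (c - t) * Rm (shift (shift d)) c 0 t))).
      { intros; reflexivity. } { reflexivity. }
      apply derivable_pt_lim_plus.
      * apply derivable_pt_lim_scal. apply (Rm_deriv d c 1 t). intros n; apply (proj1 Hd); lra.
      * apply (dpl_ext (mult_fct (fun y => c - y) (Rm (shift d) c 0)) _ t ((0 - 1) * Rm (shift d) c 0 t + (c - t) * Rm (shift (shift d)) c 0 t)); [intros; reflexivity| unfold mult_fct; ring|].
        apply derivable_pt_lim_mult.
        -- apply (dpl_ext (fct_cte c - id)%F _ t (0 - 1)); [intros; reflexivity| reflexivity|].
           apply derivable_pt_lim_minus; [apply derivable_pt_lim_const|apply derivable_pt_lim_id].
        -- apply (Rm_deriv (shift d) c 0 t). intros n; apply (proj1 Hd); lra.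
    + intros t Ht. unfold Rm, shift; simpl.
      destruct Hd as [_ H2]. specialize (H2 2%nat t ltac:(lra)). simpl in H2. nra.
  - assert (E d c (S M) c = 0) by (unfold E; rewrite Rm_at_c; ring).
    rewrite <- H.
    apply (incr (E d c (S M)) (fun t => INR (S (S M)) * Rm (shift d) c (S M) t + ((0 - 1) * Rm (shift d) c (S M) t + (c - t) * Rm (shift (shift d)) c M t))); [lra| |].
    + intros t Ht. unfold E.
      apply (dpl_ext (plus_fct (mult_real_fct (INR (S (S M))) (Rm d c (S (S M)))) (mult_fct (fun y => c - y) (Rm (shift d) c (S M)))) _ t
        (INR (S (S M)) * Rm (shift d) c (S M) t + ((0 - 1) * Rm (shift d) c (S M) t + (c - t) * Rm (shift (shift d)) c M t))).
      { intros; reflexivity. } { reflexivity. }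
      apply derivable_pt_lim_plus.
      * apply derivable_pt_lim_scal. apply (Rm_deriv d c (S (S M)) t). intros n; apply (proj1 Hd); lra.
      * apply (dpl_ext (mult_fct (fun y => c - y) (Rm (shift d) c (S M))) _ t ((0 - 1) * Rm (shift d) c (S M) t + (c - t) * Rm (shift (shift d)) c M t)); [intros; reflexivity| unfold mult_fct; ring|].
        apply derivable_pt_lim_mult.
        -- apply (dpl_ext (fct_cte c - id)%F _ t (0 - 1)); [intros; reflexivity| reflexivity|].
           apply derivable_pt_lim_minus; [apply derivable_pt_lim_const|apply derivable_pt_lim_id].
        -- apply (Rm_deriv (shift d) c (S M) t). intros n; apply (proj1 Hd); lra.
    + intros t Ht.
      set (g := fun n y => - d (S n) y).
      assert (Hg : CMs g) by (apply CMs_neg; auto).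
      pose proof (IH g Hg t ltac:(lra)) as HE. unfold E in HE.
      assert (e1 : Rm g c (S M) t = - Rm (shift d) c (S M) t).
      { unfold g. rewrite Rm_neg. reflexivity. }
      assert (e2 : Rm (shift g) c M t = - Rm (shift (shift d)) c M t).
      { unfold g, shift. rewrite <- Rm_neg. reflexivity. }
      rewrite e1, e2 in HE. rewrite (S_INR (S M)) in *. nra.
Qed.
Lemma powc_deriv c N t : derivable_pt_lim (fun y => (c - y) ^ N) t (INR N * (c - t) ^ pred N * (0 - 1)).
Proof.
  apply (dpl_ext (comp (fun y => y ^ N) (fun y => c - y)) _ t (INR N * (c - t) ^ pred N * (0 - 1))); auto.
  apply derivable_pt_lim_comp.
  - apply (dpl_ext (fct_cte c - id)%F _ t (0 - 1)); [intros; reflexivity| reflexivity|].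
    apply derivable_pt_lim_minus; [apply derivable_pt_lim_const|apply derivable_pt_lim_id].
  - apply derivable_pt_lim_pow.
Qed.

Lemma Q_lemma c N d : CMs d -> forall x y, 0 < y -> y <= x -> x < c ->
  Rm d c N x * (c - y) ^ N <= Rm d c N y * (c - x) ^ N.
Proof.
  intros Hd x y Hy Hyx Hxc.
  set (h' := fun t => (Rm (shift d) c (pred N) t * (c - t) ^ N - INR N * (c - t) ^ pred N * (0 - 1) * Rm d c N t) / ((c - t) ^ N)²).
  assert (Hh : Rm d c N x / (c - x) ^ N <= Rm d c N y / (c - y) ^ N).
  { apply (decr (fun t => Rm d c N t / (c - t) ^ N) h'); auto.
    - intros t Ht.
      apply (dpl_ext (Rm d c N / (fun y => (c - y) ^ N))%F _ t (h' t)); [intros; reflexivity|reflexivity|].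
      apply derivable_pt_lim_div.
      + apply Rm_deriv. intros n; apply (proj1 Hd); lra.
      + apply powc_deriv.
      + apply pow_nonzero. lra.
    - intros t Ht. unfold h'. unfold Rdiv. 
      assert (0 < / ((c - t) ^ N)²).
      { apply Rinv_0_lt_compat. apply Rlt_0_sqr. apply pow_nonzero. lra. }
      assert (Rm (shift d) c (pred N) t * (c - t) ^ N - INR N * (c - t) ^ pred N * (0 - 1) * Rm d c N t <= 0); [|nra].
      destruct N as [|M].
      + simpl. unfold Rm, shift; simpl. destruct Hd as [_ H2]. specialize (H2 1%nat t ltac:(lra)). simpl in H2. lra.
      + simpl pred. pose proof (E_nonpos c M d Hd t ltac:(lra)) as HE. unfold E in HE.
        assert (0 <= (c - t) ^ M) by (apply pow_le; lra).
        replace (Rm (shift d) c M t * (c - t) ^ S M - INR (S M) * (c - t) ^ M * (0 - 1) * Rm d c (S M) t)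
          with ((c - t) ^ M * (INR (S M) * Rm d c (S M) t + (c - t) * Rm (shift d) c M t)) by (simpl; ring).
        nra. }
  assert (0 < (c - x) ^ N) by (apply pow_lt; lra).
  assert (0 < (c - y) ^ N) by (apply pow_lt; lra).
  apply (Rmult_le_compat_r ((c - x) ^ N * (c - y) ^ N)) in Hh; [|nra].
  replace (Rm d c N x / (c - x) ^ N * ((c - x) ^ N * (c - y) ^ N)) with (Rm d c N x * (c - y) ^ N) in Hh by (field; lra).
  replace (Rm d c N y / (c - y) ^ N * ((c - x) ^ N * (c - y) ^ N)) with (Rm d c N y * (c - x) ^ N) in Hh by (field; lra).
  exact Hh.
Qed.
Fixpoint sm (f : nat -> R) (N : nat) : R :=
  match N with O => 0 | S M => sm f M + f M end.

Lemma sm_ext f g N : (forall k, f k = g k) -> sm f N = sm g N.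
Proof. intros H; induction N; simpl; auto. rewrite IHN, H; auto. Qed.

Lemma sm_nonneg f N : (forall k, (k < N)%nat -> 0 <= f k) -> 0 <= sm f N.
Proof.
  induction N; intros H; simpl. lra.
  assert (0 <= sm f N) by (apply IHN; intros; apply H; lia).
  assert (0 <= f N) by (apply H; lia). lra.
Qed.

Lemma sm_expand b p q X Y M :
  sm (fun k => b k * ((X - p ^ k) * (Y - q ^ k))) M =
  sm b M * X * Y + sm (fun k => b k * (p * q) ^ k) M - sm (fun k => b k * p ^ k) M * Y
  - sm (fun k => b k * q ^ k) M * X.
Proof.
  induction M; simpl. ring. rewrite IHM. rewrite Rpow_mult_distr. ring.
Qed.

Lemma pow_anti p k N : 0 <= p <= 1 -> (k <= N)%nat -> p ^ N <= p ^ k.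
Proof.
  intros Hp HkN. replace N with (k + (N - k))%nat by lia. rewrite pow_add.
  assert (0 <= p ^ k) by (apply pow_le; lra).
  assert (p ^ (N - k) <= 1).
  { replace 1 with (1 ^ (N - k)) by apply pow1. apply pow_incr. lra. }
  nra.
Qed.

Lemma cheb b p q N : (forall k, 0 <= b k) -> 0 <= p <= 1 -> 0 <= q <= 1 ->
  sm (fun k => b k * p ^ k) N * sm (fun k => b k * q ^ k) N <=
  sm b N * sm (fun k => b k * (p * q) ^ k) N.
Proof.
  intros Hb Hp Hq. induction N; simpl. lra.
  assert (HG : 0 <= sm (fun k => b k * ((p ^ N - p ^ k) * (q ^ N - q ^ k))) N).
  { apply sm_nonneg. intros k Hk.
    pose proof (pow_anti p k N Hp ltac:(lia)). pose proof (pow_anti q k N Hq ltac:(lia)).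
    specialize (Hb k). apply Rmult_le_pos; auto. nra. }
  rewrite sm_expand in HG. rewrite Rpow_mult_distr in *.
  specialize (Hb N). nra.
Qed.

Lemma T_sm d c N x : T d c N x = sm (fun k => (d k c * (-1) ^ k / INR (fact k)) * (c - x) ^ k) N.
Proof.
  induction N; simpl. auto. rewrite IHN.
  replace (x - c) with ((-1) * (c - x)) by ring. rewrite Rpow_mult_distr.
  field. apply INR_fact_neq_0.
Qed.
Lemma key d c w a b : CMs d -> 0 < w -> w < a -> w < b -> a < c -> b < c ->
  d 0%nat a * d 0%nat b <= d 0%nat w * d 0%nat (c - (c - a) * (c - b) / (c - w)).
Proof.
  intros Hd Hw Hwa Hwb Hac Hbc.
  set (z := c - (c - a) * (c - b) / (c - w)).
  set (U := c - w). set (p := (c - a) / U). set (q := (c - b) / U).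
  assert (HU : 0 < U) by (unfold U; lra).
  assert (Hp : 0 <= p < 1).
  { unfold p; split. apply Rmult_le_pos; [lra| left; apply Rinv_0_lt_compat; lra].
    apply (Rmult_lt_reg_r U); auto. unfold Rdiv; rewrite Rmult_assoc, Rinv_l; unfold U in *; lra. }
  assert (Hq : 0 <= q < 1).
  { unfold q; split. apply Rmult_le_pos; [lra| left; apply Rinv_0_lt_compat; lra].
    apply (Rmult_lt_reg_r U); auto. unfold Rdiv; rewrite Rmult_assoc, Rinv_l; unfold U in *; lra. }
  assert (Ha' : c - a = U * p) by (unfold p; field; lra).
  assert (Hb' : c - b = U * q) by (unfold q; field; lra).
  assert (Hz' : c - z = U * (p * q)) by (unfold z, p, q, U; field; lra).
  assert (Hw' : c - w = U * 1) by (unfold U; ring).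
  assert (Hzpos : a < z).
  { assert (c - z < c - a); [|lra]. rewrite Hz', Ha'.
    destruct (Rle_lt_or_eq_dec 0 p (proj1 Hp)) as [Hp0|Hp0].
    - apply Rmult_lt_compat_l; auto. rewrite <- (Rmult_1_r p) at 2. apply Rmult_lt_compat_l; lra.
    - rewrite <- Hp0. unfold p in Hp0. exfalso.
      assert ((c - a) / U * U = 0) by (rewrite <- Hp0; ring).
      replace ((c - a) / U * U) with (c - a) in H by (field; lra). lra. }
  assert (Hzc : z <= c) by (assert (0 <= U * (p * q)) by (apply Rmult_le_pos; nra); lra).
  set (bk := fun k => d k c * (-1) ^ k / INR (fact k)).
  assert (Hbk : forall k, 0 <= bk k).
  { intros k; unfold bk. destruct Hd as [_ H2]. specialize (H2 k c ltac:(lra)).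
    unfold Rdiv. apply Rmult_le_pos. lra. left; apply Rinv_0_lt_compat, INR_fact_lt_0. }
  set (be := fun k => bk k * U ^ k).
  assert (Hbe : forall k, 0 <= be k) by (intros k; unfold be; apply Rmult_le_pos; [auto| apply pow_le; lra]).
  assert (Tgen : forall N x r, c - x = U * r -> T d c N x = sm (fun k => be k * r ^ k) N).
  { intros N x r Hr. rewrite T_sm. apply sm_ext. intros k. fold (bk k). rewrite Hr, Rpow_mult_distr. unfold be; ring. }
  assert (Tnn : forall N x r, c - x = U * r -> 0 <= r -> 0 <= T d c N x).
  { intros N x r Hr Hr0. rewrite (Tgen N x r Hr). apply sm_nonneg. intros k _. apply Rmult_le_pos; auto. apply pow_le; auto. }
  assert (Tle : forall N x, 0 < x <= c -> T d c N x <= d 0%nat x).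
  { intros N x Hx. pose proof (Rm_nonneg c N d Hd x Hx). unfold Rm in H; lra. }
  assert (Rmle : forall N x r, c - x = U * r -> w <= x < c -> Rm d c N x <= d 0%nat w * r ^ N).
  { intros N x r Hr Hx. pose proof (Q_lemma c N d Hd x w Hw (proj1 Hx) (proj2 Hx)) as HQ.
    assert (Rm d c N w <= d 0%nat w) by (unfold Rm; pose proof (Tnn N w 1 Hw' ltac:(lra)); lra).
    fold U in HQ. rewrite Hr, Rpow_mult_distr in HQ.
    assert (0 < U ^ N) by (apply pow_lt; lra).
    assert (0 <= r ^ N).
    { apply pow_le. assert (0 < U * r) by lra. destruct (Rle_lt_dec 0 r); auto. nra. }
    apply (Rmult_le_reg_r (U ^ N)); auto.
    assert (0 <= (d 0%nat w - Rm d c N w) * (U ^ N * r ^ N)) by (apply Rmult_le_pos; nra). nra. }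
  set (A := d 0%nat a). set (B := d 0%nat b). set (Wv := d 0%nat w).
  assert (HA : 0 <= A) by (unfold A; destruct Hd as [_ H2]; specialize (H2 0%nat a ltac:(lra)); simpl in H2; lra).
  assert (HB : 0 <= B) by (unfold B; destruct Hd as [_ H2]; specialize (H2 0%nat b ltac:(lra)); simpl in H2; lra).
  assert (HW : 0 <= Wv) by (unfold Wv; destruct Hd as [_ H2]; specialize (H2 0%nat w ltac:(lra)); simpl in H2; lra).
  apply Rle_plus_epsilon. intros eps Heps.
  set (del := Rmin 1 (eps / (A + B + 1))).
  assert (Hdel : 0 < del) by (unfold del; apply Rmin_pos; [lra| apply Rdiv_lt_0_compat; lra]).
  assert (Hdel1 : del <= 1) by apply Rmin_l.
  assert (Hdel2 : del * (A + B + 1) <= eps).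
  { assert (del <= eps / (A + B + 1)) by apply Rmin_r.
    apply (Rmult_le_compat_r (A + B + 1)) in H; [|lra].
    replace (eps / (A + B + 1) * (A + B + 1)) with eps in H by (field; lra). lra. }
  assert (Hy : 0 < del / (Wv + 1)) by (apply Rdiv_lt_0_compat; lra).
  destruct (pow_lt_1_zero p ltac:(rewrite Rabs_right; lra) _ Hy) as [N1 HN1].
  destruct (pow_lt_1_zero q ltac:(rewrite Rabs_right; lra) _ Hy) as [N2 HN2].
  set (N := max N1 N2).
  specialize (HN1 N ltac:(unfold N; lia)). specialize (HN2 N ltac:(unfold N; lia)).
  rewrite Rabs_right in HN1 by (apply Rle_ge, pow_le; lra).
  rewrite Rabs_right in HN2 by (apply Rle_ge, pow_le; lra).
  assert (ea : Rm d c N a <= del).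
  { pose proof (Rmle N a p Ha' ltac:(lra)). fold Wv in H.
    assert (Wv * p ^ N <= Wv * (del / (Wv + 1))) by (apply Rmult_le_compat_l; lra).
    assert (Wv * (del / (Wv + 1)) <= del).
    { apply (Rmult_le_reg_r (Wv + 1)); [lra|]. replace (Wv * (del / (Wv + 1)) * (Wv + 1)) with (Wv * del) by (field; lra). nra. }
    lra. }
  assert (eb : Rm d c N b <= del).
  { pose proof (Rmle N b q Hb' ltac:(lra)). fold Wv in H.
    assert (Wv * q ^ N <= Wv * (del / (Wv + 1))) by (apply Rmult_le_compat_l; lra).
    assert (Wv * (del / (Wv + 1)) <= del).
    { apply (Rmult_le_reg_r (Wv + 1)); [lra|]. replace (Wv * (del / (Wv + 1)) * (Wv + 1)) with (Wv * del) by (field; lra). nra. }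
    lra. }
  pose proof (cheb be p q N Hbe ltac:(lra) ltac:(lra)) as Hc.
  rewrite <- (Tgen N a p Ha'), <- (Tgen N b q Hb'), <- (Tgen N z (p * q) Hz') in Hc.
  replace (sm be N) with (T d c N w) in Hc.
  2:{ rewrite (Tgen N w 1 Hw'). apply sm_ext. intros; rewrite pow1; ring. }
  pose proof (Tle N w ltac:(lra)). pose proof (Tle N z ltac:(lra)).
  pose proof (Tnn N w 1 Hw' ltac:(lra)). pose proof (Tnn N z (p*q) Hz' ltac:(nra)).
  pose proof (Tnn N a p Ha' ltac:(lra)). pose proof (Tnn N b q Hb' ltac:(lra)).
  pose proof (Tle N a ltac:(lra)). pose proof (Tle N b ltac:(lra)).
  unfold Rm in ea, eb. fold A in ea, H5. fold B in eb, H6. fold Wv in H, H1.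
  set (Za := d 0%nat z) in *.
  assert (T d c N w * T d c N z <= Wv * Za) by (apply Rmult_le_compat; lra).
  set (ta := T d c N a) in *. set (tb := T d c N b) in *.
  assert (A * B <= (ta + del) * (tb + del)) by (apply Rmult_le_compat; lra).
  assert ((ta + del) * (tb + del) <= ta * tb + del * (A + B + 1)) by nra.
  lra.
Qed.
Lemma superadd_pos d : CMs d -> (forall w, 0 < w -> d 0%nat w <= 1) ->
  forall a b, 0 < a -> 0 < b -> d 0%nat a * d 0%nat b <= d 0%nat (a + b).
Proof.
  intros Hd H1 a b Ha Hb.
  assert (Hnn : forall x, 0 < x -> 0 <= d 0%nat x).
  { intros x Hx; destruct Hd as [_ H2]; specialize (H2 0%nat x Hx); simpl in H2; lra. }
  assert (Hc : continuity_pt (d 0%nat) (a + b)).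
  { apply derivable_continuous_pt. exists (d 1%nat (a + b)). apply (proj1 Hd). lra. }
  unfold continuity_pt, continue_in, limit1_in, limit_in in Hc. simpl in Hc.
  apply Rle_plus_epsilon. intros eta Heta.
  destruct (Hc eta Heta) as [del [Hdel Hcd]].
  set (w := Rmin (Rmin a b) del / 2).
  assert (Hm1 : Rmin (Rmin a b) del <= Rmin a b) by apply Rmin_l.
  assert (Hm2 : Rmin (Rmin a b) del <= del) by apply Rmin_r.
  assert (Hm3 : Rmin a b <= a) by apply Rmin_l.
  assert (Hm4 : Rmin a b <= b) by apply Rmin_r.
  assert (Hm5 : 0 < Rmin (Rmin a b) del) by (apply Rmin_pos; [apply Rmin_pos|]; lra).
  assert (Hw : 0 < w) by (unfold w; lra).
  assert (Hwa : w < a) by (unfold w; lra).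
  assert (Hwb : w < b) by (unfold w; lra).
  assert (Hwd : w <= del / 2) by (unfold w; lra).
  set (c := w + a + b + 2 * a * b / del + 1).
  assert (Hab : 0 <= 2 * a * b / del) by (apply Rmult_le_pos; [nra| left; apply Rinv_0_lt_compat; lra]).
  pose proof (key d c w a b Hd Hw Hwa Hwb ltac:(unfold c; lra) ltac:(unfold c; lra)) as K.
  set (z := c - (c - a) * (c - b) / (c - w)) in *.
  assert (Hz : z = a + b - w - (a - w) * (b - w) / (c - w)) by (unfold z; field; unfold c; lra).
  assert (Hx : 0 <= (a - w) * (b - w) / (c - w)) by (apply Rmult_le_pos; [nra| left; apply Rinv_0_lt_compat; unfold c; lra]).
  assert (Hx2 : (a - w) * (b - w) / (c - w) < del / 2).
  { apply (Rmult_lt_reg_r (c - w)); [unfold c; lra|].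
    replace ((a - w) * (b - w) / (c - w) * (c - w)) with ((a - w) * (b - w)) by (field; unfold c; lra).
    replace (c - w) with (a + b + 2 * a * b / del + 1) by (unfold c; ring).
    replace (del / 2 * (a + b + 2 * a * b / del + 1)) with (del / 2 * (a + b + 1) + a * b) by (field; lra).
    nra. }
  assert (Hzpos : 0 < z).
  { assert (z > a); [|lra]. unfold z.
    assert ((c - a) * (c - b) / (c - w) < c - a); [|lra].
    apply (Rmult_lt_reg_r (c - w)); [unfold c; lra|].
    replace ((c - a) * (c - b) / (c - w) * (c - w)) with ((c - a) * (c - b)) by (field; unfold c; lra).
    apply Rmult_lt_compat_l; unfold c; lra. }
  assert (Hcl : Rabs (d 0%nat z - d 0%nat (a + b)) < eta).
  { apply Hcd. split. { split; [exact I| lra]. } unfold R_dist. rewrite Rabs_left1; lra. }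
  pose proof (H1 w Hw). pose proof (Hnn z Hzpos). pose proof (Hnn w Hw).
  assert (d 0%nat w * d 0%nat z <= d 0%nat z) by nra.
  apply Rabs_def2 in Hcl. lra.
Qed.

Lemma exp_le' x y : x <= y -> exp x <= exp y.
Proof. intros H; destruct (Rle_lt_or_eq_dec _ _ H); [left; apply exp_increasing; auto| subst; lra]. Qed.

Lemma ln_nonpos x : 0 < x -> x <= 1 -> ln x <= 0.
Proof. intros H1 H2. rewrite <- ln_1. destruct (Rle_lt_or_eq_dec _ _ H2); [left; apply ln_increasing; auto| subst; lra]. Qed.

Lemma rpow_ge_x x p : 0 < x <= 1 -> p <= 1 -> x <= Rpower x p.
Proof.
  intros Hx Hp. unfold Rpower. rewrite <- (exp_ln x) at 1 by lra.
  apply exp_le'. pose proof (ln_nonpos x (proj1 Hx) (proj2 Hx)). nra.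
Qed.

Lemma rpow_nonneg x p : 0 <= rpow x p.
Proof. unfold rpow; destruct (Rle_dec x 0); [lra| unfold Rpower; left; apply exp_pos]. Qed.

Lemma rpow_mono x y p : 0 < p -> 0 <= x <= y -> rpow x p <= rpow y p.
Proof.
  intros Hp Hxy. unfold rpow. destruct (Rle_dec x 0); destruct (Rle_dec y 0).
  - lra.
  - unfold Rpower; left; apply exp_pos.
  - lra.
  - apply Rle_Rpower_l; lra.
Qed.

Lemma rpow_sub s t p : 0 < p -> p <= 1 -> 0 <= s -> 0 <= t -> rpow (s + t) p <= rpow s p + rpow t p.
Proof.
  intros Hp Hp1 Hs Ht.
  destruct (Rle_lt_or_eq_dec _ _ Hs) as [Hs'|Hs']; [|subst; replace (0 + t) with t by ring; unfold rpow at 2; destruct (Rle_dec 0 0); lra].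
  destruct (Rle_lt_or_eq_dec _ _ Ht) as [Ht'|Ht']; [|subst; replace (s + 0) with s by ring; unfold rpow at 3; destruct (Rle_dec 0 0); lra].
  unfold rpow. destruct (Rle_dec (s + t) 0); [lra|]. destruct (Rle_dec s 0); [lra|]. destruct (Rle_dec t 0); [lra|].
  set (S := s + t).
  assert (e1 : Rpower s p = Rpower S p * Rpower (s / S) p).
  { rewrite Rpower_mult_distr; [|unfold S; lra| apply Rdiv_lt_0_compat; unfold S; lra]. f_equal. unfold S; field; lra. }
  assert (e2 : Rpower t p = Rpower S p * Rpower (t / S) p).
  { rewrite Rpower_mult_distr; [|unfold S; lra| apply Rdiv_lt_0_compat; unfold S; lra]. f_equal. unfold S; field; lra. }
  assert (h1 : s / S <= Rpower (s / S) p).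
  { apply rpow_ge_x; auto. split. apply Rdiv_lt_0_compat; unfold S; lra.
    apply (Rmult_le_reg_r S); [unfold S; lra|]. unfold Rdiv; rewrite Rmult_assoc, Rinv_l; unfold S; lra. }
  assert (h2 : t / S <= Rpower (t / S) p).
  { apply rpow_ge_x; auto. split. apply Rdiv_lt_0_compat; unfold S; lra.
    apply (Rmult_le_reg_r S); [unfold S; lra|]. unfold Rdiv; rewrite Rmult_assoc, Rinv_l; unfold S; lra. }
  assert (HP : 0 < Rpower S p) by (unfold Rpower; apply exp_pos).
  assert (s / S + t / S = 1) by (unfold S; field; lra).
  rewrite e1, e2. nra.
Qed.

Lemma fold_le (f g h : nat -> R) (l : list nat) : (forall i, f i <= g i + h i) ->
  fold_right Rplus 0 (map f l) <= fold_right Rplus 0 (map g l) + fold_right Rplus 0 (map h l).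
Proof. intros H; induction l; simpl; [lra|]. specialize (H a). lra. Qed.

Lemma fold_nn (f : nat -> R) (l : list nat) : (forall i, 0 <= f i) -> 0 <= fold_right Rplus 0 (map f l).
Proof. intros H; induction l; simpl; [lra|]. specialize (H a). lra. Qed.

Lemma pnorm_tri D p (t1 t2 t3 : nat -> R) : 0 < p -> p <= 1 ->
  pnorm_pow D p (fun i => t1 i - t3 i) <= pnorm_pow D p (fun i => t1 i - t2 i) + pnorm_pow D p (fun i => t2 i - t3 i).
Proof.
  intros Hp Hp1. unfold pnorm_pow. apply fold_le. intros i.
  eapply Rle_trans; [|apply rpow_sub; auto; apply Rabs_pos].
  apply rpow_mono; auto. split; [apply Rabs_pos|].
  replace (t1 i - t3 i) with ((t1 i - t2 i) + (t2 i - t3 i)) by ring. apply Rabs_triang.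
Qed.

Lemma pnorm_nn D p t : 0 <= pnorm_pow D p t.
Proof. unfold pnorm_pow. apply fold_nn. intros; apply rpow_nonneg. Qed.

Theorem mainTheorem13 (D : nat) (phi : R -> R) (p : R) :
  CMF phi -> phi 0 = 1 -> tends_to_0_at_infty phi ->
  0 < p -> p <= 1 ->
  forall t1 t2 t3 : nat -> R,
    CMF_kernel phi D p t1 t2 * CMF_kernel phi D p t2 t3
      <= CMF_kernel phi D p t1 t3.
Proof.
  intros [Hrc [d [[Hd0 Hdd] Hsg]]] H0 _ Hp Hp1 t1 t2 t3.
  assert (Hd : CMs d) by (split; auto).
  assert (Hnn : forall x, 0 <= x -> 0 <= phi x).
  { intros x Hx. destruct (Rle_lt_or_eq_dec _ _ Hx) as [Hx'|Hx']; [|subst; lra].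
    rewrite <- Hd0 by auto. specialize (Hsg 0%nat x Hx'). simpl in Hsg. lra. }
  assert (Hmp : forall x y, 0 < x <= y -> phi y <= phi x).
  { intros x y Hxy. rewrite <- !Hd0 by lra.
    apply (decr (d 0%nat) (d 1%nat)); [lra| intros; apply Hdd; lra|].
    intros t Ht. specialize (Hsg 1%nat t ltac:(lra)). simpl in Hsg. lra. }
  assert (Hm : forall x y, 0 <= x <= y -> phi y <= phi x).
  { intros x y Hxy. destruct (Rle_lt_or_eq_dec 0 x (proj1 Hxy)) as [Hx|Hx]; [apply Hmp; lra|].
    subst x. destruct (Rle_lt_or_eq_dec 0 y (proj2 Hxy)) as [Hy|Hy]; [|subst; lra].
    destruct (Rle_lt_dec (phi y) (phi 0)) as [|Hlt]; auto. exfalso.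
    destruct (Hrc (phi y - phi 0) ltac:(lra)) as [del [Hdel Hd2]].
    set (t := Rmin (del / 2) y).
    assert (t <= del / 2) by apply Rmin_l. assert (t <= y) by apply Rmin_r.
    assert (0 < t) by (apply Rmin_pos; lra).
    specialize (Hd2 t ltac:(lra)). apply Rabs_def2 in Hd2.
    pose proof (Hmp t y ltac:(lra)). lra. }
  assert (Hsup : forall a b, 0 <= a -> 0 <= b -> phi a * phi b <= phi (a + b)).
  { intros a b Ha Hb.
    destruct (Rle_lt_or_eq_dec _ _ Ha) as [Ha'|Ha']; [|subst; rewrite H0; replace (0 + b) with b by ring; lra].
    destruct (Rle_lt_or_eq_dec _ _ Hb) as [Hb'|Hb']; [|subst; rewrite H0; replace (a + 0) with a by ring; lra].
    rewrite <- !Hd0 by lra. apply superadd_pos; auto.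
    intros w Hw. rewrite Hd0 by auto. rewrite <- H0. apply Hm; lra. }
  unfold CMF_kernel.
  set (x12 := pnorm_pow D p (fun i => t1 i - t2 i)).
  set (x23 := pnorm_pow D p (fun i => t2 i - t3 i)).
  set (x13 := pnorm_pow D p (fun i => t1 i - t3 i)).
  assert (x13 <= x12 + x23) by (apply pnorm_tri; auto).
  assert (0 <= x12) by apply pnorm_nn. assert (0 <= x23) by apply pnorm_nn. assert (0 <= x13) by apply pnorm_nn.
  eapply Rle_trans; [apply Hsup; auto|]. apply Hm. lra.
Qed.
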